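(* Under the setting of the context, assume (TS1). Let $u$ be the solution of problem (P). Then (i) $\lim_{t\to\infty,\,t\in\mathbb{T}}u(0,t)=0$ and (ii) $\int_0^\infty u(0,t)\,\Delta t=\frac{A\mu_x}{k}$.
   Context: A time scale $\mathbb{T}$ is a nonempty closed subset of $\mathbb{R}$; here $\min\mathbb{T}=0$ and $\sup\mathbb{T}=+\infty$. $\sigma(t)=\inf\{s\in\mathbb{T}:s>t\}$ is the forward jump and $\mu_t(t)=\sigma(t)-t$ the graininess; $u^{\Delta_t}$ denotes the (Hilger) delta derivative in $t$ (the ordinary derivative at right-dense points, $(u(x,\sigma(t))-u(x,t))/\mu_t(t)$ at right-scattered points), and $\int\cdot\,\Delta t$ the delta integral, with $\int_0^\infty=\lim_{T\to\infty}\int_0^T$. For $p$ with $1+p\mu_t(t)\ne0$, $e_p(t,s)$ is the time-scale exponential, i.e. the solution of $y^{\Delta}=py$, $y(s)=1$. Fix $A>0$, $k>0$, $\mu_x>0$, $\Omega=\mu_x\mathbb{Z}\times\mathbb{T}$. Problem (P): $u^{\Delta_t}(x,t)+k\frac{u(x,t)-u(x-\mu_x,t)}{\mu_x}=0$ for $(x,t)\in\Omega$, $u(0,0)=A$, $u(x,0)=0$ for $x\ne0$. A solution is $u:\Omega\to\mathbb{R}$ with each $u(x,\cdot)$ delta differentiable on $\mathbb{T}$, satisfying (P), and bounded on $\mu_x\mathbb{Z}\times(\mathbb{T}\cap[0,T_0])$ for every $T_0>0$. Condition (TS1): $1-\frac{k\mu_t(t)}{\mu_x}>0$ for all $t\in\mathbb{T}$.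 *)

(* Defs.v *)
From Stdlib Require Import Reals Lra ZArith Classical ClassicalEpsilon.
From Stdlib Require Export Rtopology.
Open Scope R_scope.

Definition time_scale0 (T : R -> Prop) : Prop :=
  closed_set T /\ T 0 /\ (forall t, T t -> 0 <= t) /\
  (forall M, exists t, T t /\ M < t).

Definition is_inf (E : R -> Prop) (m : R) : Prop :=
  (forall x, E x -> m <= x) /\ (forall b, (forall x, E x -> b <= x) -> b <= m).

(** Forward jump sigma(t) = inf { s in T | s > t } (chosen by epsilon;
    it exists and is unique whenever T is unbounded above). *)
Definition sigma (T : R -> Prop) (t : R) : R :=
  epsilon (inhabits 0) (fun m => is_inf (fun s => T s /\ t < s) m).

Definition mu_t (T : R -> Prop) (t : R) : R := sigma T t - t.

Definition delta_deriv (T : R -> Prop) (f : R -> R) (t d : R) : Prop :=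
  forall eps, 0 < eps -> exists del, 0 < del /\
    forall s, T s -> Rabs (t - s) < del ->
      Rabs (f (sigma T t) - f s - d * (sigma T t - s))
        <= eps * Rabs (sigma T t - s).

(** F is a delta antiderivative of g on T (T has no maximum, so T^kappa = T). *)
Definition delta_antiderivative (T : R -> Prop) (F g : R -> R) : Prop :=
  forall t, T t -> delta_deriv T F t (g t).

Definition lim_infty_T (T : R -> Prop) (f : R -> R) (l : R) : Prop :=
  forall eps, 0 < eps -> exists M, forall t, T t -> M < t -> Rabs (f t - l) < eps.

Definition delta_integral_0_infty (T : R -> Prop) (g : R -> R) (l : R) : Prop :=
  (exists F, delta_antiderivative T F g) /\
  (forall F, delta_antiderivative T F g ->
     lim_infty_T T (fun b => F b - F 0) l).

(** Solutions of problem (P); the point x = mux * n of mux Z is encoded by n : Z. *)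
Definition solves_P (T : R -> Prop) (A k mux : R) (u : Z -> R -> R) : Prop :=
  (exists ud : Z -> R -> R,
     forall n t, T t ->
       delta_deriv T (u n) t (ud n t) /\
       ud n t + k * (u n t - u (n - 1)%Z t) / mux = 0) /\
  u 0%Z 0 = A /\
  (forall n, n <> 0%Z -> u n 0 = 0) /\
  (forall T0, 0 < T0 -> exists B, forall n t, T t -> t <= T0 -> Rabs (u n t) <= B).

Definition TS1 (T : R -> Prop) (k mux : R) : Prop :=
  forall t, T t -> 1 - k * mu_t T t / mux > 0.

(* Main.v *)
Require Import Defs.
From Stdlib Require Import Reals ZArith Lra Lia Classical ClassicalEpsilon Rtopology.
Import Defs.
Open Scope R_scope.

Lemma inf_exists (E : R -> Prop) :
  (exists x, E x) -> (exists b, forall x, E x -> b <= x) -> exists m, is_inf E m.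
Proof.
  intros [x Ex] [b Hb].
  destruct (completeness (fun y => E (- y))) as [m [H1 H2]].
  - exists (- b). intros y Ey. specialize (Hb _ Ey). lra.
  - exists (- x). rewrite Ropp_involutive. exact Ex.
  - unfold is_upper_bound in H1. exists (- m). split.
    + intros y Ey. assert (H := H1 (- y)). rewrite Ropp_involutive in H. specialize (H Ey). lra.
    + intros c Hc. assert (m <= - c).
      { apply H2. intros y Ey. specialize (Hc _ Ey). lra. }
      lra.
Qed.

Lemma inf_unique E m1 m2 : is_inf E m1 -> is_inf E m2 -> m1 = m2.
Proof.
  intros [A1 B1] [A2 B2]. apply Rle_antisym; [apply B2 | apply B1]; assumption.
Qed.

Lemma inf_approx E m : is_inf E m -> forall d, 0 < d -> exists s, E s /\ s < m + d.
Proof.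
  intros [A B] d Hd. apply NNPP. intro Hn.
  assert (m + d <= m). { apply B. intros x Ex. apply Rnot_lt_le. intro Hx. apply Hn. exists x. tauto. }
  lra.
Qed.

Lemma closure_in (T : R -> Prop) m : closed_set T ->
  (forall d, 0 < d -> exists s, T s /\ Rabs (s - m) < d) -> T m.
Proof.
  intros Hc Ha. apply NNPP. intro Hn.
  destruct (Hc m Hn) as [[d Hd] Hinc].
  destruct (Ha d Hd) as [s [Ts Hs]].
  apply (Hinc s). unfold disc. simpl. exact Hs. exact Ts.
Qed.

Lemma sigma_spec T t : time_scale0 T -> is_inf (fun s => T s /\ t < s) (sigma T t).
Proof.
  intros [Hc [H0 [Hpos Hunb]]]. unfold sigma. apply epsilon_spec.
  apply inf_exists.
  - destruct (Hunb t) as [s Hs]. exists s. exact Hs.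
  - exists t. intros x [_ Hx]. lra.
Qed.

Lemma sigma_ge T t : time_scale0 T -> t <= sigma T t.
Proof. intro HT. destruct (sigma_spec T t HT) as [_ B]. apply B. intros x [_ Hx]. lra. Qed.

Lemma sigma_next T t s : time_scale0 T -> T s -> t < s -> sigma T t <= s.
Proof. intros HT Ts Hs. destruct (sigma_spec T t HT) as [A _]. apply A. tauto. Qed.

Lemma ts_induction T (HT : time_scale0 T) (P : R -> Prop) :
  P 0 ->
  (forall t, T t -> t < sigma T t -> P t -> P (sigma T t)) ->
  (forall t, T t -> sigma T t = t -> P t ->
      exists d, 0 < d /\ forall s, T s -> t < s < t + d -> P s) ->
  (forall t, T t -> 0 < t -> (forall e, 0 < e -> exists s, T s /\ t - e < s < t) ->
      (forall s, T s -> s < t -> P s) -> P t) ->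
  forall t, T t -> P t.
Proof.
  intros P0 Hrs Hrd Hld t0 Tt0. apply NNPP. intro Hn0.
  pose proof HT as [Hc [H0 [Hpos Hunb]]].
  destruct (inf_exists (fun t => T t /\ ~ P t)) as [m Hm].
  { exists t0. tauto. }
  { exists 0. intros x [Tx _]. apply Hpos; exact Tx. }
  assert (Tm : T m).
  { apply (closure_in T m Hc). intros d Hd. destruct (inf_approx _ _ Hm d Hd) as [s [[Ts Ps] Hs]].
    exists s. split; [exact Ts|]. destruct Hm as [A _]. assert (m <= s) by (apply A; tauto).
    rewrite Rabs_right; lra. }
  assert (Hbefore : forall s, T s -> s < m -> P s).
  { intros s Ts Hs. apply NNPP. intro Hns. destruct Hm as [A _]. assert (m <= s) by (apply A; tauto). lra. }
  destruct (classic (P m)) as [Pm | nPm].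
  - assert (Hd : exists d, 0 < d /\ forall s, T s -> m < s < m + d -> P s).
    { pose proof (sigma_ge T m HT) as Hsg.
      destruct (Req_dec (sigma T m) m) as [Heq | Hne].
      - apply Hrd; assumption.
      - exists (sigma T m - m). split; [lra|]. intros s Ts Hs.
        pose proof (sigma_next T m s HT Ts (proj1 Hs)). lra. }
    destruct Hd as [d [Hd Hds]].
    destruct (inf_approx _ _ Hm d Hd) as [b [[Tb Pb] Hb]].
    destruct Hm as [A _]. assert (m <= b) by (apply A; tauto).
    destruct (Req_dec b m) as [-> | Hbm]; [contradiction|].
    apply Pb. apply Hds; [exact Tb | lra].
  - assert (Hm0 : 0 < m).
    { pose proof (Hpos m Tm). destruct (Req_dec m 0) as [->|]; [contradiction|lra]. }
    destruct (classic (forall e, 0 < e -> exists s, T s /\ m - e < s < m)) as [Hl | Hnl].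
    + apply nPm. apply Hld; assumption.
    + apply not_all_ex_not in Hnl. destruct Hnl as [e He].
      apply imply_to_and in He. destruct He as [He Hne].
      assert (Hgap : forall s, T s -> s < m -> s <= m - e).
      { intros s Ts Hs. apply Rnot_lt_le. intro Hs2. apply Hne. exists s. split; [exact Ts|lra]. }
      destruct (completeness (fun s => T s /\ s < m)) as [r [Hr1 Hr2]].
      { exists m. intros x [_ Hx]. lra. }
      { exists 0. split; assumption. }
      assert (Hrle : r <= m - e). { apply Hr2. intros x [Tx Hx]. apply Hgap; assumption. }
      assert (Tr : T r).
      { apply (closure_in T r Hc). intros d Hd. apply NNPP. intro Hn.
        assert (r <= r - d).
        { apply Hr2. intros x [Tx Hx]. apply Rnot_lt_le. intro Hx2. apply Hn. exists x.
          split; [exact Tx|]. assert (x <= r) by (apply Hr1; tauto). rewrite Rabs_left1; lra. }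
        lra. }
      assert (Hsr : sigma T r = m).
      { apply (inf_unique (fun s => T s /\ r < s)). apply sigma_spec; exact HT.
        split.
        - intros s [Ts Hs]. apply Rnot_lt_le. intro Hsm. assert (s <= r) by (apply Hr1; tauto). lra.
        - intros b Hb. apply Hb. split; [exact Tm | lra]. }
      apply nPm. rewrite <- Hsr. apply Hrs; [exact Tr | lra | ].
      apply Hbefore; [exact Tr | lra].
Qed.

Lemma frac_lt1 x : 0 <= x -> x / (x + 1) < 1.
Proof.
  intro Hx. replace (x / (x+1)) with (1 - 1/(x+1)) by (field; lra).
  assert (0 < 1/(x+1)) by (apply Rdiv_lt_0_compat; lra). lra.
Qed.

Lemma dd_scattered T f t d : T t -> delta_deriv T f t d -> t < sigma T t ->
  f (sigma T t) = f t + (sigma T t - t) * d.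
Proof.
  intros Tt Hd Hlt.
  set (x := f (sigma T t) - f t - d * (sigma T t - t)).
  assert (x = 0).
  { apply NNPP. intro Hx. assert (Hax : 0 < Rabs x) by (apply Rabs_pos_lt; exact Hx).
    set (m := sigma T t - t). assert (Hm0 : 0 < m) by (unfold m; lra).
    destruct (Hd (Rabs x / (2 * m))) as [del [Hdel H]].
    { apply Rdiv_lt_0_compat; lra. }
    specialize (H t Tt). rewrite Rminus_diag, Rabs_R0 in H. specialize (H Hdel).
    fold x in H. rewrite (Rabs_right (sigma T t - t)) in H by lra. fold m in H.
    assert (Rabs x / (2 * m) * m = Rabs x / 2) by (field; lra). lra. }
  unfold x in H. lra.
Qed.

Lemma dd_cont T f t d : T t -> delta_deriv T f t d ->
  forall e, 0 < e -> exists del, 0 < del /\ forall s, T s -> Rabs (s - t) < del -> Rabs (f s - f t) < e.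
Proof.
  intros Tt Hd e He.
  set (mu := Rabs (sigma T t - t)).
  set (e1 := e / (4 * (mu + 1))).
  assert (Hmu : 0 <= mu) by apply Rabs_pos.
  assert (He1 : 0 < e1) by (unfold e1; apply Rdiv_lt_0_compat; lra).
  destruct (Hd e1 He1) as [del [Hdel H]].
  set (del2 := Rmin del (Rmin 1 (e / (4 * (Rabs d + 1))))).
  assert (Hd0 : 0 <= Rabs d) by apply Rabs_pos.
  assert (Hq : 0 < e / (4 * (Rabs d + 1))) by (apply Rdiv_lt_0_compat; lra).
  exists del2. split.
  { unfold del2. apply Rmin_pos; [lra| apply Rmin_pos; lra]. }
  intros s Ts Hs.
  assert (Hs1 : Rabs (s - t) < del) by (eapply Rlt_le_trans; [exact Hs| apply Rmin_l]).
  assert (Hs2 : Rabs (s - t) < 1).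
  { eapply Rlt_le_trans; [exact Hs|]. unfold del2. eapply Rle_trans; [apply Rmin_r| apply Rmin_l]. }
  assert (Hs3 : Rabs (s - t) < e / (4 * (Rabs d + 1))).
  { eapply Rlt_le_trans; [exact Hs|]. unfold del2. eapply Rle_trans; [apply Rmin_r| apply Rmin_r]. }
  assert (Es := H s Ts). rewrite Rabs_minus_sym in Es. specialize (Es Hs1).
  assert (Et := H t Tt). rewrite Rminus_diag, Rabs_R0 in Et. specialize (Et Hdel).
  fold mu in Et.
  assert (Hsig : Rabs (sigma T t - s) <= mu + Rabs (s - t)).
  { replace (sigma T t - s) with ((sigma T t - t) - (s - t)) by ring.
    eapply Rle_trans; [apply Rabs_triang|]. rewrite Rabs_Ropp. unfold mu. lra. }
  replace (f s - f t) with (d * (s - t) - (f (sigma T t) - f s - d * (sigma T t - s))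
                             + (f (sigma T t) - f t - d * (sigma T t - t))) by ring.
  eapply Rle_lt_trans; [apply Rabs_triang|].
  eapply Rle_lt_trans; [apply Rplus_le_compat_r; apply Rabs_triang|].
  rewrite Rabs_Ropp, Rabs_mult.
  assert (A1 : Rabs d * Rabs (s - t) <= Rabs d * (e / (4 * (Rabs d + 1)))).
  { apply Rmult_le_compat_l; lra. }
  assert (A2 : Rabs d * (e / (4 * (Rabs d + 1))) < e / 4).
  { replace (Rabs d * (e / (4 * (Rabs d + 1)))) with (e/4 * (Rabs d / (Rabs d + 1))) by (field; lra).
    assert (Rabs d / (Rabs d + 1) < 1). { apply frac_lt1; lra. }
    nra. }
  assert (A3 : e1 * Rabs (sigma T t - s) <= e1 * (mu + 1)).
  { apply Rmult_le_compat_l; lra. }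
  assert (A4 : e1 * mu <= e1 * (mu + 1)) by nra.
  assert (A5 : e1 * (mu + 1) = e / 4) by (unfold e1; field; lra).
  lra.
Qed.

Lemma dd_scal T f t d a : delta_deriv T f t d -> delta_deriv T (fun x => a * f x) t (a * d).
Proof.
  intros Hd e He.
  assert (Ha : 0 <= Rabs a) by apply Rabs_pos.
  destruct (Hd (e / (Rabs a + 1))) as [del [Hdel H]]. { apply Rdiv_lt_0_compat; lra. }
  exists del. split; [exact Hdel|]. intros s Ts Hs.
  replace (a * f (sigma T t) - a * f s - a * d * (sigma T t - s))
    with (a * (f (sigma T t) - f s - d * (sigma T t - s))) by ring.
  rewrite Rabs_mult. specialize (H s Ts Hs).
  assert (Hp : 0 <= Rabs (sigma T t - s)) by apply Rabs_pos.
  assert (Rabs a * (Rabs (f (sigma T t) - f s - d * (sigma T t - s))) <= Rabs a * (e / (Rabs a + 1) * Rabs (sigma T t - s))) by (apply Rmult_le_compat_l; lra).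
  assert (Rabs a * (e / (Rabs a + 1)) <= e).
  { replace (Rabs a * (e / (Rabs a + 1))) with (e * (Rabs a / (Rabs a + 1))) by (field; lra).
    assert (Rabs a / (Rabs a + 1) <= 1). { apply Rlt_le, frac_lt1; lra. } nra. }
  nra.
Qed.

Lemma dd_minus T f g t d1 d2 : delta_deriv T f t d1 -> delta_deriv T g t d2 ->
  delta_deriv T (fun x => f x - g x) t (d1 - d2).
Proof.
  intros H1 H2 e He.
  destruct (H1 (e/2)) as [del1 [Hd1 K1]]; [lra|].
  destruct (H2 (e/2)) as [del2 [Hd2 K2]]; [lra|].
  exists (Rmin del1 del2). split; [apply Rmin_pos; lra|]. intros s Ts Hs.
  specialize (K1 s Ts (Rlt_le_trans _ _ _ Hs (Rmin_l _ _))).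
  specialize (K2 s Ts (Rlt_le_trans _ _ _ Hs (Rmin_r _ _))).
  replace (f (sigma T t) - g (sigma T t) - (f s - g s) - (d1 - d2) * (sigma T t - s))
    with ((f (sigma T t) - f s - d1 * (sigma T t - s)) - (g (sigma T t) - g s - d2 * (sigma T t - s))) by ring.
  eapply Rle_trans; [apply Rabs_triang|]. rewrite Rabs_Ropp. lra.
Qed.

Lemma barrier T (HT : time_scale0 T) f df g T0 :
  (forall t, T t -> delta_deriv T f t (df t)) ->
  (forall t, T t -> continuity_pt g t) ->
  f 0 <= g 0 ->
  (forall t, T t -> t < sigma T t -> sigma T t <= T0 -> f t <= g t -> f (sigma T t) <= g (sigma T t)) ->
  (forall t, T t -> sigma T t = t -> t < T0 -> f t = g t ->
     exists a, df t < a /\ exists d, 0 < d /\ forall s, t < s < t + d -> a * (s - t) <= g s - g t) ->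
  forall t, T t -> t <= T0 -> f t <= g t.
Proof.
  intros Hd Hg H0 Hrs Hrd.
  apply (ts_induction T HT (fun t => t <= T0 -> f t <= g t)).
  - intros _. exact H0.
  - intros t Tt Hlt IH Hle. apply Hrs; try assumption. apply IH. lra.
  - intros t Tt Hs IH.
    destruct (Rlt_le_dec t T0) as [HtT | HtT].
    2: { exists 1. split; [lra|]. intros s _ Hs2 Hs3. lra. }
    specialize (IH (Rlt_le _ _ HtT)).
    destruct (Rle_lt_or_eq_dec _ _ IH) as [Hlt | Heq].
    + set (e := (g t - f t) / 2).
      destruct (dd_cont T f t (df t) Tt (Hd t Tt) e) as [d1 [Hd1 K1]]. { unfold e; lra. }
      destruct (Hg t Tt e) as [d2 [Hd2 K2]]. { unfold e; lra. }
      exists (Rmin d1 d2). split; [apply Rmin_pos; lra|]. intros s Ts Hs2 _.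
      assert (Hsa : Rabs (s - t) < Rmin d1 d2) by (rewrite Rabs_right; lra).
      specialize (K1 s Ts (Rlt_le_trans _ _ _ Hsa (Rmin_l _ _))).
      assert (K2' := K2 s). simpl in K2'. unfold R_dist, D_x, no_cond in K2'.
      assert (Hne : t <> s) by lra.
      specialize (K2' (conj (conj I Hne) (Rlt_le_trans _ _ _ Hsa (Rmin_r _ _)))).
      apply Rabs_def2 in K1. apply Rabs_def2 in K2'. unfold e in *. lra.
    + destruct (Hrd t Tt Hs HtT Heq) as [a [Ha [d1 [Hd1 K1]]]].
      destruct (Hd t Tt ((a - df t) / 2)) as [d2 [Hd2 K2]]. { lra. }
      exists (Rmin d1 d2). split; [apply Rmin_pos; lra|]. intros s Ts Hs2 _.
      specialize (K1 s (conj (proj1 Hs2) (Rlt_le_trans _ _ _ (proj2 Hs2) (Rplus_le_compat_l _ _ _ (Rmin_l _ _))))).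
      assert (Hsa : Rabs (t - s) < d2).
      { rewrite Rabs_left; [|lra]. assert (Rmin d1 d2 <= d2) by apply Rmin_r. lra. }
      specialize (K2 s Ts Hsa). rewrite Hs in K2.
      rewrite (Rabs_left (t - s)) in K2 by lra.
      pose proof (Rle_abs (- (f t - f s - df t * (t - s)))) as K3. rewrite Rabs_Ropp in K3.
      assert (a * (s - t) <= g s - g t) by exact K1.
      nra.
  - intros t Tt Ht0 Hl IH Hle.
    apply Rnot_lt_le. intro Hgt.
    set (e := (f t - g t) / 2).
    destruct (dd_cont T f t (df t) Tt (Hd t Tt) e) as [d1 [Hd1 K1]]. { unfold e; lra. }
    destruct (Hg t Tt e) as [d2 [Hd2 K2]]. { unfold e; lra. }
    destruct (Hl (Rmin d1 d2)) as [s [Ts Hs]]. { apply Rmin_pos; lra. }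
    assert (Hsa : Rabs (s - t) < Rmin d1 d2) by (rewrite Rabs_left; lra).
    specialize (K1 s Ts (Rlt_le_trans _ _ _ Hsa (Rmin_l _ _))).
    assert (K2' := K2 s). simpl in K2'. unfold R_dist, D_x, no_cond in K2'.
    assert (Hne : t <> s) by lra.
    specialize (K2' (conj (conj I Hne) (Rlt_le_trans _ _ _ Hsa (Rmin_r _ _)))).
    assert (f s <= g s) by (apply IH; [exact Ts | lra | lra]).
    apply Rabs_def2 in K1. apply Rabs_def2 in K2'. unfold e in *. lra.
Qed.

Lemma pow_convex j x y : 0 <= x <= y -> INR (S j) * x ^ j * (y - x) <= y ^ (S j) - x ^ (S j).
Proof.
  intros [Hx Hxy]. induction j as [|j IH].
  - simpl. lra.
  - assert (Hxj : 0 <= x ^ j) by (apply pow_le; lra).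
    assert (Hxj1 : x ^ S j = x * x ^ j) by reflexivity.
    assert (Hyj1 : y ^ S (S j) = y * y ^ S j) by reflexivity.
    assert (Hxj2 : x ^ S (S j) = x * x ^ S j) by reflexivity.
    rewrite Hyj1, Hxj2, (S_INR (S j)).
    replace (y * y ^ S j - x * x ^ S j) with (y * (y ^ S j - x ^ S j) + x ^ S j * (y - x)) by ring.
    assert (HI : 0 <= INR (S j)) by apply pos_INR.
    assert (H1 : y * (INR (S j) * x ^ j * (y - x)) <= y * (y ^ S j - x ^ S j)) by (apply Rmult_le_compat_l; lra).
    assert (H2 : x * (INR (S j) * x ^ j * (y - x)) <= y * (INR (S j) * x ^ j * (y - x))).
    { apply Rmult_le_compat_r; [|lra]. apply Rmult_le_pos; [apply Rmult_le_pos|]; lra. }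
    rewrite Hxj1 in *. nra.
Qed.

Definition hh (c t : R) (j : nat) := (c * t) ^ j / INR (fact j).

Lemma hh_nonneg c t j : 0 <= c -> 0 <= t -> 0 <= hh c t j.
Proof.
  intros. unfold hh. apply Rmult_le_pos. apply pow_le; nra.
  apply Rlt_le, Rinv_0_lt_compat, INR_fact_lt_0.
Qed.

Lemma hh_convex c t s j : 0 < c -> 0 <= t <= s ->
  c * (s - t) * hh c t j <= hh c s (S j) - hh c t (S j).
Proof.
  intros Hc Hts. unfold hh.
  pose proof (pow_convex j (c * t) (c * s)) as P. 
  assert (Hf : INR (fact (S j)) = INR (S j) * INR (fact j)) by (rewrite fact_simpl, mult_INR; reflexivity).
  rewrite Hf.
  pose proof (INR_fact_lt_0 j) as F0.
  assert (HS : 0 < INR (S j)) by (apply lt_0_INR; lia).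
  replace ((c * s) ^ S j / (INR (S j) * INR (fact j)) - (c * t) ^ S j / (INR (S j) * INR (fact j)))
    with (((c * s) ^ S j - (c * t) ^ S j) / (INR (S j) * INR (fact j))) by (field; lra).
  replace (c * (s - t) * ((c * t) ^ j / INR (fact j)))
    with ((INR (S j) * (c * t) ^ j * (c * s - c * t)) / (INR (S j) * INR (fact j))) by (field; lra).
  unfold Rdiv. apply Rmult_le_compat_r.
  - apply Rlt_le, Rinv_0_lt_compat. nra.
  - apply P. nra.
Qed.

Lemma step_lemma T (HT : time_scale0 T) c (Hc : 0 < c)
  (HTS : forall t, T t -> 0 < 1 - c * (sigma T t - t))
  w wd w' B j T0 (HB : 0 <= B) :
  (forall t, T t -> delta_deriv T w t (wd t)) ->
  (forall t, T t -> wd t = - (c * (w t - w' t))) -> w 0 = 0 ->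
  (forall t, T t -> t <= T0 -> w' t <= B * hh c t j) ->
  forall t, T t -> t <= T0 -> w t <= B * hh c t (S j).
Proof.
  intros Hd Heq Hw0 Hw' t Tt Ht.
  pose proof HT as [_ [T0' [Hpos _]]].
  apply Rle_plus_epsilon. intros eps Heps.
  apply (barrier T HT w wd (fun s => B * hh c s (S j) + eps) T0 Hd); try assumption.
  - intros s _. unfold hh. reg.
  - rewrite Hw0. unfold hh. simpl. rewrite Rmult_0_r, Rmult_0_l.
    unfold Rdiv. rewrite Rmult_0_l, Rmult_0_r. lra.
  - intros s Ts Hlt Hle Hws.
    pose proof (dd_scattered T w s (wd s) Ts (Hd s Ts) Hlt) as Hsc.
    rewrite Hsc, (Heq s Ts).
    pose proof (HTS s Ts) as H1.
    pose proof (Hpos s Ts) as Hs0.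
    pose proof (Hw' s Ts ltac:(lra)) as Hb.
    pose proof (hh_convex c s (sigma T s) j Hc ltac:(lra)) as Hcv.
    pose proof (hh_nonneg c s (S j) (Rlt_le _ _ Hc) Hs0) as Hn.
    set (m := sigma T s - s) in *.
    set (G := B * hh c s (S j) + eps) in *.
    assert (E : w s + m * - (c * (w s - w' s)) = (1 - c * m) * w s + c * m * w' s) by ring.
    rewrite E. assert (Hm : 0 < m) by (unfold m; lra). assert (Hcm : 0 < c * m) by nra.
    assert (A1 : (1 - c * m) * w s <= (1 - c * m) * G) by (apply Rmult_le_compat_l; lra).
    assert (A2 : c * m * w' s <= c * m * (B * hh c s j)) by (apply Rmult_le_compat_l; lra).
    assert (A3 : 0 <= c * m * G) by (unfold G; apply Rmult_le_pos; nra).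
    assert (A4 : B * (c * m * hh c s j) <= B * (hh c (sigma T s) (S j) - hh c s (S j))) by (apply Rmult_le_compat_l; [lra| exact Hcv]).
    assert (HG : G = B * hh c s (S j) + eps) by reflexivity. clearbody G m. lra.
  - intros s Ts Hs Hlt Hws.
    pose proof (Hpos s Ts) as Hs0.
    pose proof (Hw' s Ts ltac:(lra)) as Hb.
    pose proof (hh_nonneg c s (S j) (Rlt_le _ _ Hc) Hs0) as Hn.
    exists (c * (B * hh c s j)). split.
    + rewrite (Heq s Ts), Hws.
      assert (c * w' s <= c * (B * hh c s j)) by (apply Rmult_le_compat_l; lra).
      assert (0 < c * (B * hh c s (S j) + eps)) by (apply Rmult_lt_0_compat; nra).
      lra.
    + exists 1. split; [lra|]. intros r Hr.
      pose proof (hh_convex c s r j Hc ltac:(lra)) as Hcv.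
      assert (B * (c * (r - s) * hh c s j) <= B * (hh c r (S j) - hh c s (S j))) by (apply Rmult_le_compat_l; lra).
      nra.
Qed.

Lemma const_le T (HT : time_scale0 T) H :
  (forall t, T t -> delta_deriv T H t 0) -> forall t, T t -> H t <= H 0.
Proof.
  intros Hd t Tt.
  pose proof HT as [_ [T0' [Hpos _]]].
  pose proof (Hpos t Tt) as Ht0.
  apply Rle_plus_epsilon. intros eps Heps.
  assert (K : H t <= H 0 + eps / (1 + t) * (1 + t)).
  { apply (barrier T HT H (fun _ => 0) (fun s => H 0 + eps / (1 + t) * (1 + s)) t Hd); try assumption.
    - intros s _. reg.
    - assert (0 < eps / (1 + t)) by (apply Rdiv_lt_0_compat; lra). lra.
    - intros s Ts Hlt _ Hs.
      rewrite (dd_scattered T H s 0 Ts (Hd s Ts) Hlt).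
      assert (0 < eps / (1 + t)) by (apply Rdiv_lt_0_compat; lra).
      assert (eps / (1 + t) * (1 + s) <= eps / (1 + t) * (1 + sigma T s)) by (apply Rmult_le_compat_l; lra).
      lra.
    - intros s Ts _ _ _. exists (eps / (1 + t)). split.
      + apply Rdiv_lt_0_compat; lra.
      + exists 1. split; [lra|]. intros r _. lra.
    - lra. }
  replace (eps / (1 + t) * (1 + t)) with eps in K by (field; lra). exact K.
Qed.

Lemma const_eq T (HT : time_scale0 T) H :
  (forall t, T t -> delta_deriv T H t 0) -> forall t, T t -> H t = H 0.
Proof.
  intros Hd t Tt. apply Rle_antisym.
  - exact (const_le T HT H Hd t Tt).
  - assert (K : (fun x => -1 * H x) t <= (fun x => -1 * H x) 0).
    { apply (const_le T HT (fun x => -1 * H x)); [|exact Tt]. intros s Ts.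
      replace 0 with (-1 * 0) by ring. apply dd_scal. apply Hd; exact Ts. }
    simpl in K. lra.
Qed.

Theorem mainTheorem7 (T : R -> Prop) (A k mux : R) (u : Z -> R -> R)
  (HT : time_scale0 T) (HA : 0 < A) (Hk : 0 < k) (Hmux : 0 < mux)
  (HTS1 : TS1 T k mux) (Hu : solves_P T A k mux u) :
  lim_infty_T T (fun t => u 0%Z t) 0 /\
  delta_integral_0_infty T (fun t => u 0%Z t) (A * mux / k).
Proof.
  destruct Hu as [[ud Hud] [Hu0 [Hun Hbd]]].
  pose proof HT as [_ [T0' [Hpos _]]].
  set (c := k / mux).
  assert (Hc : 0 < c) by (unfold c; apply Rdiv_lt_0_compat; lra).
  assert (HTS : forall t, T t -> 0 < 1 - c * (sigma T t - t)).
  { intros t Tt. specialize (HTS1 t Tt). unfold mu_t in HTS1.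
    replace (c * (sigma T t - t)) with (k * (sigma T t - t) / mux) by (unfold c; field; lra). lra. }
  assert (Hd : forall n t, T t -> delta_deriv T (u n) t (ud n t)) by (intros; apply Hud; assumption).
  assert (Heq : forall n t, T t -> ud n t = - (c * (u n t - u (n - 1)%Z t))).
  { intros n t Tt. pose proof (proj2 (Hud n t Tt)) as E.
    replace (- (c * (u n t - u (n - 1)%Z t))) with (- (k * (u n t - u (n - 1)%Z t) / mux)) by (unfold c; field; lra).
    lra. }
  assert (Neg : forall n, (n <= -1)%Z -> forall t, T t -> u n t = 0).
  { intros n Hn t0 Tt0.
    pose proof (Hpos t0 Tt0) as Ht0.
    destruct (Hbd (t0 + 1)) as [B HB]; [lra|].
    assert (HB0 : 0 <= B).
    { pose proof (HB 0%Z 0 T0' ltac:(lra)). pose proof (Rabs_pos (u 0%Z 0)). lra. }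
    assert (Q : forall j n, (n <= -1)%Z -> forall t, T t -> t <= t0 + 1 -> Rabs (u n t) <= B * hh c t j).
    { induction j as [|j IH].
      - intros n1 _ t Tt Ht. unfold hh. simpl. replace (B * (1 / 1)) with B by field. apply HB; assumption.
      - intros n1 Hn1 t Tt Ht. apply Rabs_le. split.
        + assert (K : (fun x => -1 * u n1 x) t <= B * hh c t (S j)).
          { apply (step_lemma T HT c Hc HTS (fun x => -1 * u n1 x) (fun x => -1 * ud n1 x)
                     (fun x => -1 * u (n1 - 1)%Z x) B j (t0 + 1) HB0); try assumption.
            - intros s Ts. apply dd_scal. apply Hd; exact Ts.
            - intros s Ts. simpl. rewrite (Heq n1 s Ts). ring.
            - simpl. rewrite (Hun n1 ltac:(lia)). ring.
            - intros s Ts Hs. simpl. pose proof (IH (n1 - 1)%Z ltac:(lia) s Ts Hs) as K.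
              pose proof (Rle_abs (- u (n1 - 1)%Z s)) as K2. rewrite Rabs_Ropp in K2. lra. }
          simpl in K. lra.
        + apply (step_lemma T HT c Hc HTS (u n1) (ud n1) (u (n1 - 1)%Z) B j (t0 + 1) HB0); try assumption.
          * intros s Ts. apply Hd; exact Ts.
          * intros s Ts. apply Heq; exact Ts.
          * apply Hun. lia.
          * intros s Ts Hs. pose proof (IH (n1 - 1)%Z ltac:(lia) s Ts Hs) as K.
            pose proof (Rle_abs (u (n1 - 1)%Z s)). lra. }
    apply NNPP. intro Hne.
    assert (Hax : 0 < Rabs (u n t0)) by (apply Rabs_pos_lt; exact Hne).
    destruct (cv_speed_pow_fact (c * t0) (Rabs (u n t0) / (B + 1))) as [N HN].
    { apply Rdiv_lt_0_compat; lra. }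
    specialize (HN N (le_n N)). unfold R_dist in HN. rewrite Rminus_0_r in HN.
    pose proof (Q N n Hn t0 Tt0 ltac:(lra)) as K. unfold hh in K.
    pose proof (Rle_abs ((c * t0) ^ N / INR (fact N))).
    assert (B * ((c * t0) ^ N / INR (fact N)) <= B * (Rabs (u n t0) / (B + 1))) by (apply Rmult_le_compat_l; lra).
    assert (B * (Rabs (u n t0) / (B + 1)) < Rabs (u n t0)).
    { replace (B * (Rabs (u n t0) / (B + 1))) with (Rabs (u n t0) * (B / (B + 1))) by (field; lra).
      pose proof (frac_lt1 B HB0). nra. }
    lra. }
  assert (Hv : forall t, T t -> ud 0%Z t = - (c * u 0%Z t)).
  { intros t Tt. rewrite (Heq 0%Z t Tt). rewrite (Neg (0 - 1)%Z ltac:(lia) t Tt). ring. }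
  assert (Vpos : forall t, T t -> 0 <= u 0%Z t).
  { intros t Tt. apply Rle_plus_epsilon. intros eps Heps.
    assert (K : (fun x => -1 * u 0%Z x) t <= (fun _ => eps) t).
    { apply (barrier T HT (fun x => -1 * u 0%Z x) (fun x => -1 * ud 0%Z x) (fun _ => eps) t); try assumption.
      - intros s Ts. apply dd_scal. apply Hd; exact Ts.
      - intros s _. reg.
      - simpl. lra.
      - intros s Ts Hlt _ Hs. simpl in *.
        rewrite (dd_scattered T (u 0%Z) s (ud 0%Z s) Ts (Hd 0%Z s Ts) Hlt), (Hv s Ts).
        pose proof (HTS s Ts).
        assert (A1 : (1 - c * (sigma T s - s)) * (-1 * u 0%Z s) <= (1 - c * (sigma T s - s)) * eps) by (apply Rmult_le_compat_l; lra).
        assert (A2 : 0 <= c * (sigma T s - s) * eps).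
        { apply Rmult_le_pos; [apply Rmult_le_pos|]; lra. }
        lra.
      - intros s Ts _ _ Hs. simpl in *. exists 0. split.
        + rewrite (Hv s Ts). nra.
        + exists 1. split; [lra|]. intros r _. lra.
      - lra. }
    simpl in K. lra. }
  assert (Vup : forall t, T t -> u 0%Z t <= A / (1 + c / 2 * t)).
  { intros t Tt.
    apply (barrier T HT (u 0%Z) (ud 0%Z) (fun s => A / (1 + c / 2 * s)) t); try assumption.
    - intros s Ts. apply Hd; exact Ts.
    - intros s Ts. pose proof (Hpos s Ts). reg. nra.
    - rewrite Hu0. replace (A / (1 + c / 2 * 0)) with A by field. lra.
    - intros s Ts Hlt _ Hs.
      rewrite (dd_scattered T (u 0%Z) s (ud 0%Z s) Ts (Hd 0%Z s Ts) Hlt), (Hv s Ts).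
      pose proof (HTS s Ts) as H1. pose proof (Hpos s Ts) as Hs0.
      set (m := sigma T s - s) in *.
      assert (Hm : 0 < m) by (unfold m; lra).
      set (p := 1 + c / 2 * s) in *.
      assert (Hp : 1 <= p) by (unfold p; nra).
      replace (1 + c / 2 * sigma T s) with (p + c / 2 * m) by (unfold p, m; ring).
      assert (A1 : (1 - c * m) * u 0%Z s <= (1 - c * m) * (A / p)) by (apply Rmult_le_compat_l; lra).
      assert (E : A / (p + c / 2 * m) - (1 - c * m) * (A / p)
                  = A * (c * m * (p - / 2) + (c * m) * (c * m) / 2) * / (p * (p + c / 2 * m))) by (field; nra).
      assert (A2 : 0 <= A * (c * m * (p - / 2) + (c * m) * (c * m) / 2) * / (p * (p + c / 2 * m))).
      { apply Rmult_le_pos; [apply Rmult_le_pos|].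
        - lra.
        - assert (0 <= c * m) by nra. assert (0 <= c * m * (p - /2)) by (apply Rmult_le_pos; lra). nra.
        - apply Rlt_le, Rinv_0_lt_compat. assert (0 < c / 2 * m) by (apply Rmult_lt_0_compat; lra).
          apply Rmult_lt_0_compat; lra. }
      replace (u 0%Z s + m * - (c * u 0%Z s)) with ((1 - c * m) * u 0%Z s) by ring.
      lra.
    - intros s Ts Hs _ Heqs. pose proof (Hpos s Ts) as Hs0.
      set (p := 1 + c / 2 * s) in *.
      assert (Hp : 1 <= p) by (unfold p; nra).
      exists (- (A * (c / 2)) / (p * p)). split.
      + rewrite (Hv s Ts), Heqs.
        assert (E : - (A * (c / 2)) / (p * p) - - (c * (A / p)) = A * c * (2 * p - 1) / (2 * (p * p))) by (field; lra).
        assert (0 < A * c * (2 * p - 1) / (2 * (p * p))).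
        { apply Rdiv_lt_0_compat; [apply Rmult_lt_0_compat; [nra|lra] | nra]. }
        lra.
      + exists 1. split; [lra|]. intros r Hr.
        assert (Hq : p <= 1 + c / 2 * r) by (unfold p; nra).
        assert (E : A / (1 + c / 2 * r) - A / p - - (A * (c / 2)) / (p * p) * (r - s)
                   = A * (c / 2) * (c / 2) * ((r - s) * (r - s)) / (p * p * (1 + c / 2 * r))).
        { unfold p. field. split; nra. }
        assert (0 <= A * (c / 2) * (c / 2) * ((r - s) * (r - s)) / (p * p * (1 + c / 2 * r))).
        { unfold Rdiv. apply Rmult_le_pos.
          - apply Rmult_le_pos; [|nra]. apply Rmult_le_pos; [|lra]. apply Rmult_le_pos; lra.
          - apply Rlt_le, Rinv_0_lt_compat. apply Rmult_lt_0_compat; nra. }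
        lra.
    - lra. }
  assert (Lim : lim_infty_T T (fun t => u 0%Z t) 0).
  { intros eps Heps. exists (2 * A / (c * eps)). intros t Tt Ht. simpl.
    rewrite Rminus_0_r. pose proof (Vpos t Tt). pose proof (Vup t Tt). pose proof (Hpos t Tt).
    rewrite Rabs_right by lra.
    assert (Hce : 0 < c * eps) by nra.
    assert (H2 : 2 * A < c * eps * t).
    { apply (Rmult_lt_compat_l (c * eps)) in Ht; [|lra].
      replace (c * eps * (2 * A / (c * eps))) with (2 * A) in Ht by (field; lra). lra. }
    assert (A / (1 + c / 2 * t) < eps).
    { apply (Rmult_lt_reg_r (1 + c / 2 * t)); [nra|].
      replace (A / (1 + c / 2 * t) * (1 + c / 2 * t)) with A by (field; nra). nra. }
    lra. }
  split; [exact Lim|].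
  set (F0 := fun x => - / c * u 0%Z x).
  assert (HF0 : delta_antiderivative T F0 (fun t => u 0%Z t)).
  { intros t Tt.
    pose proof (dd_scal T (u 0%Z) t (ud 0%Z t) (- / c) (Hd 0%Z t Tt)) as K.
    replace (- / c * ud 0%Z t) with (u 0%Z t) in K by (rewrite (Hv t Tt); field; lra).
    exact K. }
  split; [exists F0; exact HF0|].
  intros F HF.
  assert (Hc0 : forall t, T t -> F t - F0 t = F 0 - F0 0).
  { apply (const_eq T HT (fun x => F x - F0 x)). intros t Tt.
    replace 0 with (u 0%Z t - u 0%Z t) by ring. apply dd_minus; [apply HF | apply HF0]; exact Tt. }
  intros eps Heps.
  destruct (Lim (eps * c)) as [M HM]; [nra|].
  exists M. intros b Tb Hb.
  specialize (HM b Tb Hb). simpl in HM. rewrite Rminus_0_r in HM.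
  pose proof (Hc0 b Tb) as E. unfold F0 in E.
  replace (F b - F 0 - A * mux / k) with (- / c * u 0%Z b) by (rewrite Hu0 in E; assert (A * mux / k = / c * A) by (unfold c; field; lra); lra).
  rewrite Rabs_mult, Rabs_Ropp, Rabs_right by (apply Rle_ge, Rlt_le, Rinv_0_lt_compat; lra).
  apply (Rmult_lt_reg_l c); [lra|]. rewrite <- Rmult_assoc, Rinv_r by lra. lra.
Qed.
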